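(* Let $\mathcal{N}=\mathcal{N}_1\cup\mathcal{N}_2$ be a partition of a finite set of nodes (computing-bottleneck nodes $\mathcal{N}_1$, communication-bottleneck nodes $\mathcal{N}_2$), $B>0$, $\gamma\in(0,1]$, and $T_o$ a constant. For each $i$ let $a_i=q_ib_i+s_i$ and $P_i=k_ib_i+m_i$ be affine in the (real-valued) local batch size $b_i$, with $q_i+k_i>0$ for $i\in\mathcal{N}_1$ and $q_i+\gamma k_i>0$ for $i\in\mathcal{N}_2$. Consider the problem $$\min\ \mu\quad\text{s.t.}\quad a_i+P_i\le\mu\ (i\in\mathcal{N}_1),\quad a_i+\gamma P_i+T_o\le\mu\ (i\in\mathcal{N}_2),\quad \sum_{i\in\mathcal{N}}b_i=B.$$ Then at an optimal solution $\mu^*$, $a_i+P_i=\mu^*$ for all $i\in\mathcal{N}_1$ and $a_i+\gamma P_i+T_o=\mu^*$ for all $i\in\mathcal{N}_2$; i.e. all computing-bottleneck nodes have the same computing time $t_{compute}=a_i+P_i$, all communication-bottleneck nodes have the same first-bucket synchronization start $\mathit{syncStart}=a_i+\gamma P_i$, and $t_{compute}=\mathit{syncStart}+T_o$.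
   Context: Synchronous data-parallel training model: $a_i$ is the time for parameter update, data loading and forward propagation, $P_i$ the backpropagation time, $\gamma$ the overlap ratio, $T_o$ the synchronization time of all gradient buckets except the last, and $T_u$ that of the last bucket; the batch processing time is $\mu+T_u$, so minimizing $\mu$ minimizes batch processing time. *)

(* Defs.v *)
From mathcomp Require Import all_boot all_order all_algebra.
Set Implicit Arguments. Unset Strict Implicit. Unset Printing Implicit Defensive.
Import Order.TTheory GRing.Theory Num.Theory.
Local Open Scope ring_scope.

Section Model.
Variables (R : realFieldType) (T : finType) (N1 N2 : {set T}).
Variables (q s k m : T -> R) (gamma To B : R).

Definition a_time (b : T -> R) (i : T) : R := q i * b i + s i.
Definition P_time (b : T -> R) (i : T) : R := k i * b i + m i.

Definition feasible (mu : R) (b : T -> R) : Prop :=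
  (forall i, i \in N1 -> a_time b i + P_time b i <= mu) /\
  (forall i, i \in N2 -> a_time b i + gamma * P_time b i + To <= mu) /\
  \sum_(i : T) b i = B.

Definition optimal (mu : R) (b : T -> R) : Prop :=
  feasible mu b /\ forall mu' b', feasible mu' b' -> mu <= mu'.
End Model.

(* Main.v *)
Require Import Defs.
From mathcomp Require Import all_boot all_order all_algebra.
From mathcomp Require Import ring lra.
Import Order.TTheory GRing.Theory Num.Theory.
Local Open Scope ring_scope.

Theorem mainTheorem7 (R : realFieldType) (T : finType) (N1 N2 : {set T})
  (q s k m : T -> R) (gamma To B : R) (mu : R) (b : T -> R) :
  N1 :&: N2 = set0 -> N1 :|: N2 = [set: T] ->
  0 < B -> 0 < gamma -> gamma <= 1 ->
  (forall i, i \in N1 -> 0 < q i + k i) ->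
  (forall i, i \in N2 -> 0 < q i + gamma * k i) ->
  optimal N1 N2 q s k m gamma To B mu b ->
  (forall i, i \in N1 -> a_time q s b i + P_time k m b i = mu) /\
  (forall i, i \in N2 -> a_time q s b i + gamma * P_time k m b i + To = mu).
Proof.
move=> hI hU hB hg hg1 h1 h2 [[f1 [f2 fs]] opt].
pose c i := if i \in N1 then q i + k i else q i + gamma * k i.
pose d i := if i \in N1 then s i + m i else s i + gamma * m i + To.
have in2 : forall i, i \notin N1 -> i \in N2.
  move=> i /negbTE ni; have : i \in N1 :|: N2 by rewrite hU inE.
  by rewrite inE ni.
have not12 : forall i, i \in N1 -> i \in N2 -> False.
  move=> i a b2; have : i \in N1 :&: N2 by rewrite inE a b2.
  by rewrite hI inE.
have cpos : forall i, 0 < c i.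
  move=> i; rewrite /c; case: ifP => H; [exact: h1|by apply: h2; apply: in2; rewrite H].
have fE : forall (x : T -> R) i, c i * x i + d i =
   if i \in N1 then a_time q s x i + P_time k m x i
   else a_time q s x i + gamma * P_time k m x i + To.
  move=> y j; rewrite /c /d /a_time /P_time; case: ifP => _; ring.
pose g i := (mu - d i) / c i - b i.
have gge : forall i, 0 <= g i.
  move=> i; rewrite /g subr_ge0 ler_pdivlMr ?cpos //.
  have : c i * b i + d i <= mu.
    rewrite fE; case: ifP => H; [exact: f1|by apply: f2; apply: in2; rewrite H].
  move=> H0; rewrite mulrC; lra.
pose S := \sum_i g i.
have S0 : S = 0.
  apply/eqP; rewrite eq_le sumr_ge0 ?andbT; last by move=> i _; exact: gge.
  rewrite leNgt; apply/negP => Spos.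
  pose W := \sum_i (c i)^-1.
  have Wpos : 0 < W.
    have [i _] : exists i : T, true.
      case: (pickP (fun i : T => true)) => [i _|H]; first by exists i.
      move: Spos; rewrite /S big_pred0 ?ltxx //.
    rewrite /W (bigD1 i) //= ltr_pwDl ?invr_gt0 ?sumr_ge0 // => j _.
    by rewrite invr_ge0 ltW.
  pose mu' := mu - S / W.
  pose b' i := (mu' - d i) / c i.
  have feas : feasible N1 N2 q s k m gamma To B mu' b'.
    have Hi : forall i, c i * b' i + d i = mu'.
      move=> i; rewrite /b' mulrC divfK ?gt_eqF ?cpos //; ring.
    split; [|split].
    - move=> i Hi1; have := Hi i; rewrite fE Hi1 => ->; exact: lexx.
    - move=> i Hi2; have := Hi i; rewrite fE.
      case: ifP => H; first by exfalso; exact: not12 H Hi2.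
      by move=> ->.
    - have e1 : forall i, b' i = (g i + b i) - S / W * (c i)^-1.
        move=> i; rewrite /b' /mu' /g; ring.
      rewrite (eq_bigr _ (fun i _ => e1 i)).
      have -> : \sum_i ((g i + b i) - S / W * (c i)^-1) =
         \sum_i g i + \sum_i b i - S / W * \sum_i (c i)^-1.
        by rewrite sumrB big_split mulr_sumr.
      rewrite -/S fs -/W divfK ?gt_eqF //; ring.
  have := opt _ _ feas; rewrite /mu'.
  have : 0 < S / W by rewrite divr_gt0.
  lra.
have gz : forall i, g i = 0.
  move=> i; apply/eqP; rewrite eq_le gge andbT.
  have := (psumr_eq0P (P := predT) (fun j _ => gge j)) S0 i isT.
  by move=> ->.
have key : forall i, c i * b i + d i = mu.
  move=> i; have := gz i; rewrite /g => /eqP; rewrite subr_eq0 => /eqP <-.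
  rewrite mulrC divfK ?gt_eqF ?cpos //; ring.
split.
- by move=> i H; have := key i; rewrite fE H.
- move=> i H; have := key i; rewrite fE; case: ifP => H1 //.
  by exfalso; exact: not12 H1 H.
Qed.
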